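(* Let $p$ be a prime and $r\ge2$ even. Let $(w_1,w_2)$ be a sequence in $U(p^r)$ such that $(f_{p^r,p}(w_1),f_{p^r,p}(w_2))$ is not a $Q_p$-weighted zero-sum sequence, and let $u\in U(p^r)$. Then the sequence $(uw_1,uw_2,pw_1,pw_2)$ in $\mathbb Z_{p^r}$ has no $S(p^r)^*$-weighted zero-sum subsequence.
   Context: $\mathbb Z_m=\mathbb Z/m\mathbb Z$, $U(m)$ its group of units, $S(m)=\{x^2:x\in\mathbb Z_m\}$, $S(m)^*=S(m)\setminus\{0\}$; for a prime $p$, $Q_p=\{x^2:x\in U(p)\}$. For $m\mid n$, $f_{n,m}:\mathbb Z_n\to\mathbb Z_m$ is the natural map. For $A\subseteq\mathbb Z_m$, a sequence $(y_1,\dots,y_k)$ ($k\ge1$) is an $A$-weighted zero-sum sequence if there exist $a_i\in A$ with $\sum a_iy_i=0$; a sequence has an $A$-weighted zero-sum subsequence if some nonempty subsequence is one. *)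

(* Defs.v *)
From mathcomp Require Import all_boot all_order all_algebra.
Set Implicit Arguments. Unset Strict Implicit. Unset Printing Implicit Defensive.
Import GRing.Theory.
Local Open Scope ring_scope.

(* Z_m is 'Z_m (used only for m >= 2). *)

Definition Sq (R : comNzRingType) : R -> Prop := fun x => exists y : R, x = y ^+ 2.
Definition Sqstar (R : comNzRingType) : R -> Prop := fun x => Sq x /\ x <> 0.
Definition Qunits (R : comUnitRingType) : R -> Prop :=
  fun x => exists y : R, y \is a GRing.unit /\ x = y ^+ 2.

Definition fnat (n m : nat) (x : 'Z_n) : 'Z_m := (nat_of_ord x)%:R.

Definition weighted_zs (R : comNzRingType) (A : R -> Prop) (s : seq R) : Prop :=
  (0 < size s)%N /\
  exists a : 'I_(size s) -> R, (forall i, A (a i)) /\ \sum_(i < size s) a i * s`_i = 0.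

Definition has_wzs_subseq (R : comNzRingType) (A : R -> Prop) (s : seq R) : Prop :=
  exists t : seq R, subseq t s /\ weighted_zs A t.

(* Main.v *)
Require Import Defs.
From mathcomp Require Import all_boot all_order all_algebra.
From mathcomp Require Import zify ring.
Import GRing.Theory.
Set Implicit Arguments. Unset Strict Implicit.
Local Open Scope ring_scope.

Lemma pairQ0 (p : nat) (a b x y : 'Z_p) : a \is a GRing.unit -> b \is a GRing.unit ->
  a ^+ 2 * x + b ^+ 2 * y = 0 -> weighted_zs (@Qunits 'Z_p) [:: x; y].
Proof.
move=> ua ub e; split => //.
exists (fun i : 'I_2 => if val i == 0%N then a ^+ 2 else b ^+ 2); split.
  by case=> [[|[|]]] //= _; [exists a | exists b].
by rewrite !big_ord_recl big_ord0 /= addr0.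
Qed.

Lemma pairQ (p : nat) (a b x y c : 'Z_p) : a \is a GRing.unit -> b \is a GRing.unit ->
  c \is a GRing.unit ->
  a ^+ 2 * (c * x) + b ^+ 2 * (c * y) = 0 -> weighted_zs (@Qunits 'Z_p) [:: x; y].
Proof.
move=> ua ub uc e; apply: (pairQ0 ua ub).
have -> : a ^+ 2 * x + b ^+ 2 * y = (c^-1 * c) * (a ^+ 2 * x + b ^+ 2 * y)
  by rewrite mulVr ?mul1r.
transitivity (c^-1 * (a ^+ 2 * (c * x) + b ^+ 2 * (c * y))); first ring.
by rewrite e mulr0.
Qed.

Lemma min4 (a b c d : nat) : exists m, [/\ m = minn (minn a b) (minn c d), (m <= a)%N, (m <= b)%N, (m <= c)%N & (m <= d)%N] /\ (m = a \/ m = b \/ m = c \/ m = d).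
Proof.
exists (minn (minn a b) (minn c d)); split.
  split=> //; rewrite ?geq_min ?leqnn ?orbT //.
rewrite /minn; case: (ltnP a b) => _; case: (ltnP c d) => _; case: ltnP => _; tauto.
Qed.

Lemma unit_nz (R : unitRingType) (x : R) : x \is a GRing.unit -> x = 0 -> False.
Proof. by move=> u e; move: u; rewrite e unitr0. Qed.

Section Aux.

Variables (p r : nat).
Hypothesis pp : prime p.
Hypothesis r1 : (1 <= r)%N.

Lemma p_gt1 : (1 < p)%N. Proof. exact: prime_gt1. Qed.
Lemma N_gt1 : (1 < p ^ r)%N.
Proof. by rewrite -{1}(expn0 p) ltn_exp2l ?p_gt1. Qed.
Lemma p_dvd_N : (p %| p ^ r)%N.
Proof. by rewrite -{1}(expn1 p) dvdn_exp2l. Qed.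

Lemma natZ0 (N n : nat) : (1 < N)%N -> ((n%:R : 'Z_N) = 0) <-> (N %| n)%N.
Proof.
move=> N1; split.
  by move/(congr1 val); rewrite /= val_Zp_nat // => /eqP; rewrite -/(dvdn N n).
move=> /eqP h; apply: val_inj; rewrite /= val_Zp_nat //.
Qed.

Lemma phi_nat (n : nat) : fnat p (n%:R : 'Z_(p ^ r)) = n%:R.
Proof.
rewrite /fnat val_Zp_nat ?N_gt1 //; apply: val_inj.
by rewrite /= !val_Zp_nat ?p_gt1 // modn_dvdm // p_dvd_N.
Qed.

Lemma phiD (x y : 'Z_(p ^ r)) : fnat p (x + y) = fnat p x + fnat p y.
Proof.
have ex : x + y = ((val x + val y)%N)%:R by rewrite natrD !natr_Zp.
by rewrite ex phi_nat natrD.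
Qed.

Lemma phiM (x y : 'Z_(p ^ r)) : fnat p (x * y) = fnat p x * fnat p y.
Proof.
have ex : x * y = ((val x * val y)%N)%:R by rewrite natrM !natr_Zp.
by rewrite ex phi_nat natrM.
Qed.

Lemma phi1 : fnat p (1 : 'Z_(p ^ r)) = 1.
Proof. by rewrite -[1 in LHS](mulr1n 1) phi_nat. Qed.

Lemma phi_unit (x : 'Z_(p ^ r)) : x \is a GRing.unit ->
  fnat p x * fnat p x^-1 = 1.
Proof. by move=> ux; rewrite -phiM divrr // phi1. Qed.

Lemma phi_unit0 (x : 'Z_(p ^ r)) : x \is a GRing.unit -> fnat p x <> 0.
Proof.
move=> /phi_unit h e; move: h; rewrite e mul0r => /esym/eqP.
by rewrite oner_eq0.
Qed.

Lemma phi_unitU (x : 'Z_(p ^ r)) : x \is a GRing.unit -> fnat p x \is a GRing.unit.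
Proof.
move=> ux; apply/unitrP; exists (fnat p x^-1).
by rewrite mulrC phi_unit.
Qed.

Lemma lemA (m : nat) (X : 'Z_(p ^ r)) : (m < r)%N -> (p ^ m)%:R * X = 0 ->
  fnat p X = 0.
Proof.
move=> mr; rewrite -[X]natr_Zp -natrM => /(natZ0 _ N_gt1) h.
rewrite phi_nat; apply/(natZ0 _ p_gt1).
have e : (p ^ r = p ^ m * p ^ (r - m))%N by rewrite -expnD subnKC // ltnW.
move: h; move: (nat_of_ord X) => n; rewrite e dvdn_pmul2l ?expn_gt0 ?prime_gt0 //.
apply: dvdn_trans; rewrite -{1}(expn1 p) dvdn_exp2l //; lia.
Qed.

Lemma sq_decomp (x : 'Z_(p ^ r)) : Sqstar x ->
  exists k v, (2 * k < r)%N /\ v \is a GRing.unit /\ x = (p ^ (2 * k))%:R * v ^+ 2.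
Proof.
move=> [[y ->] nz].
have n0 : (0 < val y)%N.
  rewrite lt0n; apply/negP => /eqP e; apply: nz.
  by rewrite -[y]natr_Zp e expr2 mul0r.
case: (pfactor_coprime pp n0) => n' cop e.
set k := logn p (val y) in e.
have ey : y = (p ^ k)%:R * n'%:R by rewrite -natrM mulnC -e natr_Zp.
have un : (n'%:R : 'Z_(p ^ r)) \is a GRing.unit.
  by rewrite unitZpE ?N_gt1 // coprimeXl // coprime_sym.
have ep : ((p ^ k)%:R : 'Z_(p ^ r)) ^+ 2 = (p ^ (2 * k))%:R.
  by rewrite -natrX -expnM mulnC.
exists k, n'%:R; split; last first.
  by split => //; rewrite ey exprMn ep.
rewrite ltnNge; apply/negP => le; apply: nz.
rewrite ey exprMn ep.
have -> : ((p ^ (2 * k))%:R : 'Z_(p ^ r)) = 0.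
  by apply/(natZ0 _ N_gt1); rewrite dvdn_exp2l.
by rewrite mul0r.
Qed.



Lemma phiX2 (x : 'Z_(p ^ r)) : fnat p (x ^+ 2) = fnat p x ^+ 2.
Proof. by rewrite !expr2 phiM. Qed.

Lemma phi_pow (d : nat) : fnat p ((p ^ d)%:R : 'Z_(p ^ r)) = if d is 0 then 1 else 0.
Proof.
rewrite phi_nat; case: d => [|d]; first by rewrite expn0.
by apply/(natZ0 _ p_gt1); rewrite expnS dvdn_mulr.
Qed.

Lemma core (w1 w2 u v1 v2 v3 v4 : 'Z_(p ^ r)) (k1 k2 k3 k4 : nat) :
  ~~ odd r ->
  w1 \is a GRing.unit -> w2 \is a GRing.unit -> u \is a GRing.unit ->
  v1 \is a GRing.unit -> v2 \is a GRing.unit ->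
  v3 \is a GRing.unit -> v4 \is a GRing.unit ->
  ~ weighted_zs (@Qunits 'Z_p) [:: fnat p w1; fnat p w2] ->
  (2 * k1 <= r)%N -> (2 * k2 <= r)%N -> (2 * k3 <= r)%N -> (2 * k4 <= r)%N ->
  [|| (2 * k1 < r)%N, (2 * k2 < r)%N, (2 * k3 < r)%N | (2 * k4 < r)%N] ->
  (p ^ (2 * k1))%:R * v1 ^+ 2 * (u * w1) + (p ^ (2 * k2))%:R * v2 ^+ 2 * (u * w2)
  + (p ^ (2 * k3))%:R * v3 ^+ 2 * (p%:R * w1) + (p ^ (2 * k4))%:R * v4 ^+ 2 * (p%:R * w2)
  <> 0.
Proof.
move=> ro uw1 uw2 uu uv1 uv2 uv3 uv4 nQ l1 l2 l3 l4 lt.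
have [h rh] : exists h, r = (2 * h)%N.
  exists r./2; rewrite -{1}(odd_double_half r) (negbTE ro) add0n -mul2n //.
have [m [[_ hm1 hm2 hm3 hm4] hmeq]] := min4 (2 * k1) (2 * k2) (2 * k3).+1 (2 * k4).+1.
have mr : (m < r)%N by move: lt; rewrite !orbA; lia.
have par1 : (2 * k1 - m = 0)%N \/ (2 * k2 - m = 0)%N ->
   (0 < (2 * k3).+1 - m)%N /\ (0 < (2 * k4).+1 - m)%N by lia.
have some0 : [\/ (2 * k1 - m = 0)%N, (2 * k2 - m = 0)%N, ((2 * k3).+1 - m = 0)%N
   | ((2 * k4).+1 - m = 0)%N].
  by case: hmeq => [->|[->|[->|->]]]; [constructor 1|constructor 2|constructor 3|constructor 4]; rewrite subnn.
have h1 : ((p ^ (2 * k1))%:R : 'Z_(p ^ r)) = (p ^ m)%:R * (p ^ (2 * k1 - m))%:R.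
  by rewrite -natrM -expnD; congr (_ ^ _)%:R; lia.
have h2 : ((p ^ (2 * k2))%:R : 'Z_(p ^ r)) = (p ^ m)%:R * (p ^ (2 * k2 - m))%:R.
  by rewrite -natrM -expnD; congr (_ ^ _)%:R; lia.
have h3 : ((p ^ (2 * k3))%:R * p%:R : 'Z_(p ^ r)) = (p ^ m)%:R * (p ^ ((2 * k3).+1 - m))%:R.
  by rewrite -!natrM -expnSr -expnD; congr (_ ^ _)%:R; lia.
have h4 : ((p ^ (2 * k4))%:R * p%:R : 'Z_(p ^ r)) = (p ^ m)%:R * (p ^ ((2 * k4).+1 - m))%:R.
  by rewrite -!natrM -expnSr -expnD; congr (_ ^ _)%:R; lia.
set B := (p ^ (2 * k1 - m))%:R * (v1 ^+ 2 * (u * w1)) + (p ^ (2 * k2 - m))%:R * (v2 ^+ 2 * (u * w2))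
  + (p ^ ((2 * k3).+1 - m))%:R * (v3 ^+ 2 * w1) + (p ^ ((2 * k4).+1 - m))%:R * (v4 ^+ 2 * w2).
move=> E.
have E2 : (p ^ m)%:R * B = 0.
  rewrite -E /B.
  transitivity (((p ^ m)%:R * (p ^ (2 * k1 - m))%:R) * (v1 ^+ 2 * (u * w1))
    + ((p ^ m)%:R * (p ^ (2 * k2 - m))%:R) * (v2 ^+ 2 * (u * w2))
    + ((p ^ m)%:R * (p ^ ((2 * k3).+1 - m))%:R) * (v3 ^+ 2 * w1)
    + ((p ^ m)%:R * (p ^ ((2 * k4).+1 - m))%:R) * (v4 ^+ 2 * w2)); first ring.
  rewrite -h1 -h2 -h3 -h4; ring.
have := lemA mr E2; rewrite /B !phiD !phiM !phi_pow -!expr2.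
have U1 := phi_unitU uw1; have U2 := phi_unitU uw2; have Uu := phi_unitU uu.
have V1 := phi_unitU uv1; have V2 := phi_unitU uv2.
have V3 := phi_unitU uv3; have V4 := phi_unitU uv4.
move: par1 some0.
case: (2 * k1 - m)%N => [|d1]; case: (2 * k2 - m)%N => [|d2];
case: ((2 * k3).+1 - m)%N => [|d3]; case: ((2 * k4).+1 - m)%N => [|d4];
move=> par some; rewrite ?mul1r ?mul0r ?addr0 ?add0r => e;
try (by case: par; auto);
try (by case: some => [] [] ).
all: try first [ by apply: nQ; apply: (pairQ V1 V2 Uu) | by apply: nQ; apply: (pairQ0 V3 V4)
  | by apply: (unit_nz _ e); rewrite !unitrM ?unitrX ?U1 ?U2 ?Uu ?V1 ?V2 ?V3 ?V4 ].
Qed.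
End Aux.

Section Fin.
Variables (p r : nat).
Hypothesis pp : prime p.
Hypothesis r2 : (2 <= r)%N.
Hypothesis ro : ~~ odd r.

Lemma decomp0 (c : 'Z_(p ^ r)) : c = 0 \/ Sqstar c ->
  exists k v, [/\ (2 * k <= r)%N, v \is a GRing.unit, c = (p ^ (2 * k))%:R * v ^+ 2
    & (Sqstar c -> (2 * k < r)%N)].
Proof.
have r1 : (1 <= r)%N by apply: leq_trans r2.
case=> [->|S].
  have e2 : (2 * r./2)%N = r by rewrite -{2}(odd_double_half r) (negbTE ro) add0n -mul2n.
  exists r./2, 1; split.
  - by rewrite e2.
  - by rewrite unitr1.
  - rewrite e2 expr1n mulr1; symmetry; apply/(natZ0 _ (N_gt1 pp r1)); done.
  - by case.
have [k [v [kr [uv e]]]] := sq_decomp pp r1 S.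
by exists k, v; split => //; apply: ltnW.
Qed.

Lemma final (w1 w2 u c1 c2 c3 c4 : 'Z_(p ^ r)) :
  w1 \is a GRing.unit -> w2 \is a GRing.unit -> u \is a GRing.unit ->
  ~ weighted_zs (@Qunits 'Z_p) [:: fnat p w1; fnat p w2] ->
  c1 = 0 \/ Sqstar c1 -> c2 = 0 \/ Sqstar c2 -> c3 = 0 \/ Sqstar c3 -> c4 = 0 \/ Sqstar c4 ->
  Sqstar c1 \/ Sqstar c2 \/ Sqstar c3 \/ Sqstar c4 ->
  c1 * (u * w1) + c2 * (u * w2) + c3 * (p%:R * w1) + c4 * (p%:R * w2) = 0 -> False.
Proof.
move=> uw1 uw2 uu nQ /decomp0 [k1 [v1 [l1 uv1 e1 s1]]] /decomp0 [k2 [v2 [l2 uv2 e2 s2]]]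
  /decomp0 [k3 [v3 [l3 uv3 e3 s3]]] /decomp0 [k4 [v4 [l4 uv4 e4 s4]]] some.
have r1 : (1 <= r)%N by apply: leq_trans r2.
rewrite e1 e2 e3 e4.
apply: (core pp r1 ro uw1 uw2 uu uv1 uv2 uv3 uv4 nQ l1 l2 l3 l4).
by case: some => [/s1 ->|[/s2 ->|[/s3 ->|/s4 ->]]]; rewrite ?orbT.
Qed.

End Fin.

Unset Implicit Arguments.
Set Strict Implicit.

Theorem mainTheorem13 (p r : nat) (w1 w2 u : 'Z_(p ^ r)) :
  prime p -> (2 <= r)%N -> ~~ odd r ->
  w1 \is a GRing.unit -> w2 \is a GRing.unit ->
  ~ weighted_zs (@Qunits 'Z_p) [:: fnat p w1; fnat p w2] ->
  u \is a GRing.unit ->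
  ~ has_wzs_subseq (@Sqstar 'Z_(p ^ r))
      [:: u * w1; u * w2; p%:R * w1; p%:R * w2].
Proof.
move=> pp r2 ro uw1 uw2 nQ uu [t [/subseqP [m sm ->] [sz [a [Ha Hs]]]]].
have F := final pp r2 ro uw1 uw2 uu nQ.
move: sm sz a Ha Hs.
case: m => [|b1 [|b2 [|b3 [|b4 [|]]]]] //= _.
case: b1; case: b2; case: b3; case: b4 => //= _ a Ha Hs;
rewrite !big_ord_recl big_ord0 /= in Hs.
- apply: (F (a (ord0)) (a (lift ord0 (ord0))) (a (lift ord0 (lift ord0 (ord0)))) (a (lift ord0 (lift ord0 (lift ord0 (ord0)))))); try by [left | right; apply: Ha | right; left; apply: Ha | right; right; left; apply: Ha | right; right; right; apply: Ha].
  by rewrite ?mul0r ?addr0 ?add0r -Hs; ring.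
- apply: (F (a (ord0)) (a (lift ord0 (ord0))) (a (lift ord0 (lift ord0 (ord0)))) 0); try by [left | right; apply: Ha | right; left; apply: Ha | right; right; left; apply: Ha | right; right; right; apply: Ha].
  by rewrite ?mul0r ?addr0 ?add0r -Hs; ring.
- apply: (F (a (ord0)) (a (lift ord0 (ord0))) 0 (a (lift ord0 (lift ord0 (ord0))))); try by [left | right; apply: Ha | right; left; apply: Ha | right; right; left; apply: Ha | right; right; right; apply: Ha].
  by rewrite ?mul0r ?addr0 ?add0r -Hs; ring.
- apply: (F (a (ord0)) (a (lift ord0 (ord0))) 0 0); try by [left | right; apply: Ha | right; left; apply: Ha | right; right; left; apply: Ha | right; right; right; apply: Ha].
  by rewrite ?mul0r ?addr0 ?add0r -Hs; ring.
- apply: (F (a (ord0)) 0 (a (lift ord0 (ord0))) (a (lift ord0 (lift ord0 (ord0))))); try by [left | right; apply: Ha | right; left; apply: Ha | right; right; left; apply: Ha | right; right; right; apply: Ha].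
  by rewrite ?mul0r ?addr0 ?add0r -Hs; ring.
- apply: (F (a (ord0)) 0 (a (lift ord0 (ord0))) 0); try by [left | right; apply: Ha | right; left; apply: Ha | right; right; left; apply: Ha | right; right; right; apply: Ha].
  by rewrite ?mul0r ?addr0 ?add0r -Hs; ring.
- apply: (F (a (ord0)) 0 0 (a (lift ord0 (ord0)))); try by [left | right; apply: Ha | right; left; apply: Ha | right; right; left; apply: Ha | right; right; right; apply: Ha].
  by rewrite ?mul0r ?addr0 ?add0r -Hs; ring.
- apply: (F (a (ord0)) 0 0 0); try by [left | right; apply: Ha | right; left; apply: Ha | right; right; left; apply: Ha | right; right; right; apply: Ha].
  by rewrite ?mul0r ?addr0 ?add0r -Hs; ring.
- apply: (F 0 (a (ord0)) (a (lift ord0 (ord0))) (a (lift ord0 (lift ord0 (ord0))))); try by [left | right; apply: Ha | right; left; apply: Ha | right; right; left; apply: Ha | right; right; right; apply: Ha].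
  by rewrite ?mul0r ?addr0 ?add0r -Hs; ring.
- apply: (F 0 (a (ord0)) (a (lift ord0 (ord0))) 0); try by [left | right; apply: Ha | right; left; apply: Ha | right; right; left; apply: Ha | right; right; right; apply: Ha].
  by rewrite ?mul0r ?addr0 ?add0r -Hs; ring.
- apply: (F 0 (a (ord0)) 0 (a (lift ord0 (ord0)))); try by [left | right; apply: Ha | right; left; apply: Ha | right; right; left; apply: Ha | right; right; right; apply: Ha].
  by rewrite ?mul0r ?addr0 ?add0r -Hs; ring.
- apply: (F 0 (a (ord0)) 0 0); try by [left | right; apply: Ha | right; left; apply: Ha | right; right; left; apply: Ha | right; right; right; apply: Ha].
  by rewrite ?mul0r ?addr0 ?add0r -Hs; ring.
- apply: (F 0 0 (a (ord0)) (a (lift ord0 (ord0)))); try by [left | right; apply: Ha | right; left; apply: Ha | right; right; left; apply: Ha | right; right; right; apply: Ha].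
  by rewrite ?mul0r ?addr0 ?add0r -Hs; ring.
- apply: (F 0 0 (a (ord0)) 0); try by [left | right; apply: Ha | right; left; apply: Ha | right; right; left; apply: Ha | right; right; right; apply: Ha].
  by rewrite ?mul0r ?addr0 ?add0r -Hs; ring.
- apply: (F 0 0 0 (a (ord0))); try by [left | right; apply: Ha | right; left; apply: Ha | right; right; left; apply: Ha | right; right; right; apply: Ha].
  by rewrite ?mul0r ?addr0 ?add0r -Hs; ring.
Qed.
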